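(* There exists an online adaptive algorithm that, given an uncertainty matroid $\mathcal{M}$ with uniform query costs and a minimum-weight basis $B$ (with respect to the unknown weights $w$) that can be verified by a minimum-cardinality certificate $Q^*$ of $\mathcal{M}$, queries a set $Q$ with $|Q|\le 2|Q^*|$ that is a certificate verifying $B$.
   Context: A weighted uncertainty matroid $\mathcal{M}=(E,\mathcal{I},A,w)$ consists of a matroid $M=(E,\mathcal{I})$ on a finite set $E$, for each $e\in E$ a non-empty finite union $A_e$ of bounded real intervals (each open or closed), and a weight $w_e\in A_e$. A minimum-weight basis (MWB) is a basis minimizing total weight. A weight assignment is $w^*$ with $w^*_e\in A_e$, consistent with $Q$ if $w^*_e=w_e$ on $Q$. $Q$ verifies an MWB $B$ (is a certificate for $B$) if for every weight assignment consistent with $Q$, $B$ is an MWB with respect to it; a certificate for $\mathcal{M}$ is a set verifying some MWB, and a minimum-cardinality certificate is one of minimum size. In the online adaptive setting the algorithm knows $M$ and the areas $A_e$ but initially not the weights; querying an element $e$ reveals $w_e$ (at unit cost), and the algorithm chooses queries adaptively based on previously revealed weights; $Q$ denotes the set of queried elements. *)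

(* Defs.v *)
From mathcomp Require Import all_boot all_order all_algebra.
From mathcomp Require Import reals.
Set Implicit Arguments. Unset Strict Implicit. Unset Printing Implicit Defensive.
Import Order.TTheory GRing.Theory Num.Theory.
Local Open Scope ring_scope.

Record matroid (E : finType) := Matroid {
  indep : pred {set E};
  indep0 : indep set0;
  indep_sub : forall X Y : {set E}, Y \subset X -> indep X -> indep Y;
  indep_exch : forall X Y : {set E}, indep X -> indep Y -> (#|X| < #|Y|)%N ->
    exists2 e, e \in Y :\: X & indep (e |: X)
}.

Definition is_basis (E : finType) (M : matroid E) (B : {set E}) : Prop :=
  indep M B /\ forall X : {set E}, indep M X -> B \subset X -> X = B.

Definition is_MWB (R : realType) (E : finType) (M : matroid E) (w : E -> R)
    (B : {set E}) : Prop :=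
  is_basis M B /\
  forall B' : {set E}, is_basis M B' -> \sum_(e in B) w e <= \sum_(e in B') w e.

Record piece (R : realType) := Piece { pclosed : bool; plo : R; phi : R }.

Definition in_piece (R : realType) (p : piece R) (x : R) : bool :=
  if pclosed p then (plo p <= x) && (x <= phi p) else (plo p < x) && (x < phi p).

Definition area (R : realType) := seq (piece R).

Definition in_area (R : realType) (a : area R) (x : R) : bool :=
  has (fun p => in_piece p x) a.

Definition area_nonempty (R : realType) (a : area R) : Prop :=
  exists x, in_area a x.

Definition consistent (R : realType) (E : finType) (A : E -> area R)
    (w : E -> R) (Q : {set E}) (w' : E -> R) : Prop :=
  (forall e, in_area (A e) (w' e)) /\ (forall e, e \in Q -> w' e = w e).

Definition verifies (R : realType) (E : finType) (M : matroid E)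
    (A : E -> area R) (w : E -> R) (Q B : {set E}) : Prop :=
  forall w' : E -> R, consistent A w Q w' -> is_MWB M w' B.

Definition certificate (R : realType) (E : finType) (M : matroid E)
    (A : E -> area R) (w : E -> R) (Q : {set E}) : Prop :=
  exists B, verifies M A w Q B.

Definition min_certificate (R : realType) (E : finType) (M : matroid E)
    (A : E -> area R) (w : E -> R) (Q : {set E}) : Prop :=
  certificate M A w Q /\
  forall Q' : {set E}, certificate M A w Q' -> (#|Q| <= #|Q'|)%N.

(* knowledge state: revealed weights (None = not yet queried) *)
Definition kstate (R : realType) (E : finType) := {ffun E -> option R}.

(* a strategy maps the current knowledge to the next query, or None = stop *)
Definition strategy (R : realType) (E : finType) := kstate R E -> option E.

Definition init_state (R : realType) (E : finType) : kstate R E :=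
  [ffun _ => None].

Definition reveal (R : realType) (E : finType) (w : E -> R) (st : kstate R E)
    (e : E) : kstate R E :=
  [ffun x => if x == e then Some (w e) else st x].

Fixpoint run (R : realType) (E : finType) (S : strategy R E) (w : E -> R)
    (k : nat) (st : kstate R E) : kstate R E :=
  match k with
  | 0 => st
  | k'.+1 => match S st with
             | None => st
             | Some e => run S w k' (reveal w st e)
             end
  end.

Definition queried (R : realType) (E : finType) (st : kstate R E) : {set E} :=
  [set e | st e != None].

(* Main.v *)
Require Import Defs.
From mathcomp Require Import all_boot all_order all_algebra.
From mathcomp Require Import reals boolp zify.
Import Order.TTheory GRing.Theory Num.Theory.
Local Open Scope ring_scope.
Set Implicit Arguments. Unset Strict Implicit.

Section Mat.
Variable E : finType.
Variable M : matroid E.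

Lemma indep_card_le (X Z : {set E}) : is_basis M X -> indep M Z -> (#|Z| <= #|X|)%N.
Proof.
move=> [iX mX] iZ; rewrite leqNgt; apply/negP => lt.
have [e /setDP [eZ eX] ie] := indep_exch iX iZ lt.
have := mX _ ie (subsetUr _ _) => h.
by move: eX; rewrite -h setU11.
Qed.

Lemma bases_card (X Y : {set E}) : is_basis M X -> is_basis M Y -> #|X| = #|Y|.
Proof.
move=> bX bY; apply/eqP; rewrite eqn_leq.
by rewrite (indep_card_le bY bX.1) (indep_card_le bX bY.1).
Qed.

Lemma indep_card_basis (X Z : {set E}) : is_basis M X -> indep M Z -> #|Z| = #|X| -> is_basis M Z.
Proof.
move=> bX iZ cZ; split=> // Z' iZ' sZ.
apply/eqP; rewrite eq_sym eqEcard sZ /= cZ.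
exact: indep_card_le.
Qed.

Lemma augment (I X : {set E}) : indep M I -> is_basis M X ->
  exists Z, [/\ is_basis M Z, I \subset Z & Z \subset I :|: X].
Proof.
move=> iI bX.
pose F := [pred Z : {set E} | indep M Z && (I \subset Z) && (Z \subset I :|: X)].
have FI : F I by rewrite /F /= iI subxx subsetUl.
case: (@arg_maxnP _ I F (fun Z : {set E} => #|Z|) FI) => Z /andP [/andP [iZ sIZ] sZ] maxZ.
exists Z; split => //.
apply: (indep_card_basis bX iZ).
apply/eqP; rewrite eqn_leq (indep_card_le bX iZ) /= leqNgt; apply/negP => lt.
have [e /setDP [eX eZ] ie] := indep_exch iZ bX.1 lt.
have : F (e |: Z).
  rewrite /F /= ie (subset_trans sIZ (subsetUr _ _)) /= subUset sZ andbT.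
  by rewrite sub1set inE eX orbT.
move/maxZ; rewrite /geq /= cardsU1 eZ add1n; by rewrite ltnn.
Qed.

Lemma exchange1 (X Y : {set E}) y : is_basis M X -> is_basis M Y -> y \in Y -> y \notin X ->
  exists2 x, x \in X :\: Y & is_basis M (y |: (X :\ x)).
Proof.
move=> bX bY yY yX.
have iI : indep M (y |: (X :&: Y)).
  apply: (indep_sub _ bY.1); rewrite subUset sub1set yY subsetIr //.
have [Z [bZ sIZ sZ]] := augment iI bX.
have cZ := bases_card bZ bX.
have : ~~ (X \subset Z).
  apply/negP => sXZ.
  have : (y |: X) \subset Z by rewrite subUset sXZ andbT sub1set (subsetP sIZ) // setU11.
  move/subset_leq_card; rewrite cardsU1 yX cZ add1n ltnn //.
case/subsetPn => x xX xZ.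
have xY : x \notin Y.
  apply/negP => xY; apply/negP: xZ; rewrite negbK.
  by apply: (subsetP sIZ); rewrite !inE xX xY orbT.
exists x; first by rewrite inE xY xX.
have -> : y |: (X :\ x) = Z.
  apply/eqP; rewrite eq_sym eqEcard; apply/andP; split.
    apply/subsetP => z zZ; have := subsetP sZ z zZ.
    have zx : z != x by apply/negP => /eqP ezx; subst; rewrite zZ in xZ.
    rewrite !inE zx /= => /orP [/orP [-> //|/andP [-> _]]|->]; by rewrite orbT.
  rewrite cardsU1 !inE negb_and yX orbT /= cZ.
  rewrite (cardsD1 x X) xX add1n //.
exact: bZ.
Qed.


Lemma local_opt (R : realType) (w : E -> R) B : is_basis M B ->
  (forall f e, f \in B -> e \notin B -> indep M (e |: (B :\ f)) -> w f <= w e) ->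
  forall B', is_basis M B' -> \sum_(x in B) w x <= \sum_(x in B') w x.
Proof.
move=> bB lo.
suff H : forall n B', #|B' :\: B| = n -> is_basis M B' -> \sum_(x in B) w x <= \sum_(x in B') w x.
  by move=> B'; apply: H.
elim=> [|n IH] B' cn bB'.
  have sB : B' \subset B by rewrite -setD_eq0 -cards_eq0 cn.
  by rewrite (bB'.2 B bB.1 sB).
have : (0 < #|B' :\: B|)%N by rewrite cn.
case/card_gt0P => e1 e1in.
case: (arg_minP w e1in) => e0 e0in e0min.
have : e0 \in B' :\: B by []. rewrite inE => /andP [e0B e0B'].
have [f /setDP [fB fB'] bf] := exchange1 bB bB' e0B' e0B.
have wfe0 := lo f e0 fB e0B bf.1.
have [e /setDP [eB' eB] be] := exchange1 bB' bB fB fB'.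
have wfe : w f <= w e.
  apply: (le_trans wfe0); apply: e0min; have : e \in B' :\: B by rewrite inE eB eB'. by [].
have eq1 : (f |: (B' :\ e)) :\: B = (B' :\: B) :\ e.
  apply/setP => z; rewrite !inE.
  case: (z =P f) => [->|_]; first by rewrite fB /= andbF.
  by rewrite /=; case: (z \in B); rewrite /= ?andbF.
have := IH _ _ be; rewrite eq1.
have : #|B' :\: B| = ((e \in B' :\: B) + #|(B' :\: B) :\ e|)%N by apply: cardsD1.
rewrite cn inE eB eB' add1n => [[->]] /(_ erefl) h.
apply: (le_trans h).
rewrite big_setU1 /=; last by rewrite !inE (negbTE fB') andbF.
rewrite [X in _ <= X](big_setD1 e) //=.
by rewrite lerD2r.
Qed.

End Mat.
Section Main.
Variables (R : realType) (E : finType) (M : matroid E) (A : E -> area R) (B : {set E}).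

Definition Cp (w : E -> R) (Q : {set E}) (f e : E) : Prop :=
  forall w', consistent A w Q w' -> w' f <= w' e.
Definition exch (f e : E) : bool := [&& f \in B, e \notin B & indep M (e |: (B :\ f))].
Definition aviol (f e : E) : bool := exch f e && ~~ `[< Cp (fun _ => 0) set0 f e >].
Definition stepT (T : {set E}) (p : E * E) : {set E} :=
  if [&& aviol p.1 p.2, p.1 \notin T & p.2 \notin T] then p.1 |: (p.2 |: T) else T.
Definition Tset : {set E} := foldl stepT set0 (enum [set: E * E]).
Definition wof (st : kstate R E) (x : E) : R := odflt 0 (st x).
Definition strat : strategy R E := fun st =>
  match [pick x | (x \in Tset) && (x \notin queried st)] with
  | Some x => Some x
  | None => [pick x | (x \notin queried st) &&
      `[< exists f e, exch f e /\ (x = f \/ x = e) /\ ~ Cp (wof st) (queried st) f e >]]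
  end.

Lemma Cp_ext (w1 w2 : E -> R) (Q : {set E}) (f e : E) : (forall x, x \in Q -> w1 x = w2 x) -> Cp w1 Q f e -> Cp w2 Q f e.
Proof.
move=> h C w' [ar eq]; apply: C; split=> // x xQ; rewrite eq // h //.
Qed.

Lemma Cp_mono (w : E -> R) (Q1 Q2 : {set E}) (f e : E) : (forall x, in_area (A x) (w x)) ->
  (forall x, x \in Q1 -> (x == f) || (x == e) -> x \in Q2) -> Cp w Q1 f e -> Cp w Q2 f e.
Proof.
move=> aw h C w' [ar eq].
pose w'' x := if (x == f) || (x == e) then w' x else w x.
have : w'' f <= w'' e.
  apply: C; split.
    by move=> x; rewrite /w''; case: ifP.
  move=> x xQ; rewrite /w''; case: ifP => // hx; exact: eq (h x xQ hx).
by rewrite /w'' !eqxx /= orbT.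
Qed.

Lemma exch_basis (f e : E) : is_basis M B -> exch f e -> is_basis M (e |: (B :\ f)).
Proof.
move=> bB /and3P [fB eB ie]; apply: (indep_card_basis bB ie).
rewrite cardsU1 !inE (negbTE eB) andbF /=.
by rewrite (cardsD1 f B) fB.
Qed.

Lemma exch_le (w : E -> R) (f e : E) : is_MWB M w B -> exch f e -> w f <= w e.
Proof.
move=> [bB mB] ex; have := mB _ (exch_basis bB ex).
move/and3P: ex => [fB eB _].
rewrite (big_setD1 f fB) big_setU1 /=; last by rewrite !inE (negbTE eB) andbF.
by rewrite lerD2r.
Qed.

Lemma verif_Cp (w : E -> R) (Q : {set E}) (f e : E) : verifies M A w Q B -> exch f e -> Cp w Q f e.
Proof. by move=> V ex w' c; apply: exch_le (V _ c) ex. Qed.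

Lemma Cp_full (w : E -> R) (Q : {set E}) (f e : E) : is_MWB M w B -> exch f e -> f \in Q -> e \in Q -> Cp w Q f e.
Proof.
move=> mw ex fQ eQ w' [_ eq]; rewrite !eq //; exact: exch_le mw ex.
Qed.

Lemma Cp_verif (w : E -> R) (Q : {set E}) : is_basis M B -> (forall f e, exch f e -> Cp w Q f e) -> verifies M A w Q B.
Proof.
move=> bB h w' c; split=> //; apply: local_opt => // f e fB eB ie.
by apply: (h f e) => //; rewrite /exch fB eB ie.
Qed.

Lemma aviol_neq (f e : E) : aviol f e -> f != e.
Proof. by case/andP => /and3P [fB eB _] _; apply/eqP => ef; subst; rewrite fB in eB. Qed.

Lemma T_sub (s : seq (E * E)) (T0 : {set E}) : T0 \subset foldl stepT T0 s.
Proof.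
elim: s T0 => [|p s IH] T0 /=; first exact: subxx.
apply: subset_trans (IH _); rewrite /stepT; case: ifP => _; last exact: subxx.
by apply/subsetP => x xT; rewrite !inE xT !orbT.
Qed.

Lemma T_hit (s : seq (E * E)) (T0 : {set E}) (p : E * E) : p \in s -> aviol p.1 p.2 ->
  (p.1 \in foldl stepT T0 s) || (p.2 \in foldl stepT T0 s).
Proof.
elim: s T0 => [|q s IH] T0 //=; rewrite inE => /orP [/eqP <-|ps] av; last exact: IH.
have sub := T_sub s (stepT T0 p).
case h : [&& aviol p.1 p.2, p.1 \notin T0 & p.2 \notin T0].
  have e1 : stepT T0 p = p.1 |: (p.2 |: T0) by rewrite /stepT h.
  by rewrite (subsetP sub) // e1 !inE eqxx.
have e1 : stepT T0 p = T0 by rewrite /stepT h.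
move/negbT: h; rewrite av /= negb_and !negbK => /orP [h|h].
  by rewrite (subsetP sub) // e1.
by rewrite [X in _ || X](subsetP sub) ?orbT // e1.
Qed.

Lemma T_card (C : {set E}) (s : seq (E * E)) (T0 : {set E}) : (forall f e, aviol f e -> (f \in C) || (e \in C)) ->
  (#|T0| <= 2 * #|C :&: T0|)%N -> (#|foldl stepT T0 s| <= 2 * #|C :&: foldl stepT T0 s|)%N.
Proof.
move=> cov; elim: s T0 => [|p s IH] T0 //= h; apply: IH.
rewrite /stepT; case: ifP => // /and3P [av p1T p2T].
have ne := aviol_neq av.
rewrite cardsU1 !inE negb_or ne /= (negbTE p1T) cardsU1 (negbTE p2T).
have : (#|C :&: T0|.+1 <= #|C :&: (p.1 |: (p.2 |: T0))|)%N.
  case/orP: (cov _ _ av) => pC.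
    have := subset_leq_card (_ : p.1 |: (C :&: T0) \subset C :&: (p.1 |: (p.2 |: T0))).
    rewrite cardsU1 !inE (negbTE p1T) andbF /= add1n; apply.
    by apply/subsetP => x; rewrite !inE => /orP [/eqP ->|/andP [-> ->]]; rewrite ?pC ?eqxx ?orbT.
  have := subset_leq_card (_ : p.2 |: (C :&: T0) \subset C :&: (p.1 |: (p.2 |: T0))).
  rewrite cardsU1 !inE (negbTE p2T) andbF /= add1n; apply.
  by apply/subsetP => x; rewrite !inE => /orP [/eqP ->|/andP [-> ->]]; rewrite ?pC ?eqxx ?orbT.
lia.
Qed.


Lemma queried_reveal (w : E -> R) (st : kstate R E) x :
  queried (reveal w st x) = x |: queried st.
Proof. apply/setP => z; rewrite !inE ffunE; case: (z == x) => //. Qed.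

Lemma strat_new (st : kstate R E) x : strat st = Some x -> x \notin queried st.
Proof.
rewrite /strat; case: pickP => [y /andP [_ h] [<-] //|_].
by case: pickP => [y /andP [h _] [<-] //|_].
Qed.

Section Run.
Variables (w : E -> R) (Qs : {set E}).
Hypothesis aw : forall x, in_area (A x) (w x).
Hypothesis mw : is_MWB M w B.
Hypothesis VQ : verifies M A w Qs B.

Definition Inv (st : kstate R E) : Prop :=
  (forall x, x \in queried st -> st x = Some (w x)) /\ queried st \subset Tset :|: Qs.

Lemma wof_eq st : Inv st -> forall x, x \in queried st -> wof st x = w x.
Proof. by move=> [h _] x xq; rewrite /wof h. Qed.

Lemma Qs_cover f e : aviol f e -> (f \in Qs) || (e \in Qs).
Proof.
move=> av; apply/negPn/negP; rewrite negb_or => /andP [fQ eQ].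
move/andP: av => [ex /asboolPn]; apply.
apply: (@Cp_ext w); first by move=> x; rewrite inE.
apply: (@Cp_mono w Qs) => //; last exact: verif_Cp VQ ex.
move=> x xQ /orP [/eqP ex'|/eqP ex']; subst; by [rewrite xQ in fQ|rewrite xQ in eQ].
Qed.

Lemma step_ok st x : Inv st -> strat st = Some x -> x \in Tset :|: Qs.
Proof.
move=> I; rewrite /strat; case: pickP => [y /andP [yT _] [<-]|nT]; first by rewrite inE yT.
case: pickP => [y /andP [yP /asboolP [f [e [ex [xfe nC]]]]] [<-]|//].
have TP : Tset \subset queried st.
  by apply/subsetP => z zT; move: (nT z); rewrite zT /= => /negbT; rewrite negbK.
have nCw : ~ Cp w (queried st) f e.
  by move=> C; apply: nC; apply: Cp_ext C => z zq; rewrite (wof_eq I zq).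
rewrite inE; apply/orP; right; apply/negPn/negP => yQ.
case fe : ((f \in queried st) || (e \in queried st)); last first.
  move/negbT: fe; rewrite negb_or => /andP [fP eP].
  have av : aviol f e.
    rewrite /aviol ex /=; apply/asboolPn => C; apply: nCw.
    apply: (@Cp_mono w set0) => //; first by move=> z; rewrite inE.
    by apply: (@Cp_ext (fun _ => 0)) => // z; rewrite inE.
  have := T_hit set0 (_ : (f, e) \in enum [set: E * E]) av.
  rewrite mem_enum inE => /(_ erefl) /orP [h|h].
    by rewrite (subsetP TP) in fP.
  by rewrite (subsetP TP) in eP.
apply: nCw; apply: (@Cp_mono w Qs) => //; last exact: verif_Cp VQ ex.
move=> z zQ zfe; apply/negPn/negP => zP.
have zy : z != y by apply/eqP => ezy; subst; rewrite zQ in yQ.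
case: xfe => ?; case/orP: zfe => /eqP ?; subst; rewrite ?eqxx // in zy;
  by rewrite (negbTE yP) (negbTE zP) in fe.
Qed.

Lemma Inv_reveal st x : Inv st -> strat st = Some x -> Inv (reveal w st x).
Proof.
move=> I hs; have := step_ok I hs => xTQ.
case: I => [h s]; split.
  move=> z; rewrite queried_reveal !inE ffunE.
  move=> /orP [/eqP ->|zq]; first by rewrite eqxx.
  case: ifP => [/eqP -> //|_]; apply: h; by rewrite inE.
by rewrite queried_reveal subUset sub1set xTQ s.
Qed.

Lemma run_ok k st : Inv st ->
  Inv (run strat w k st) /\
  (strat (run strat w k st) = None \/ (#|queried st| + k <= #|queried (run strat w k st)|)%N).
Proof.
elim: k st => [|k IH] st I /=; first by split => //; right; rewrite addn0.
case hs : (strat st) => [x|]; last by split => //; left.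
have [I' H] := IH _ (Inv_reveal I hs); split => //.
case: H => [->|H]; [by left|right].
move: H; rewrite queried_reveal cardsU1 (strat_new hs); lia.
Qed.

Lemma full_none st : (#|E| <= #|queried st|)%N -> strat st = None.
Proof.
case hs : (strat st) => [x|] // c.
have := strat_new hs => xq.
have : queried st \subset [set~ x].
  by apply/subsetP => z zq; rewrite !inE; apply/eqP => ezx; subst; rewrite zq in xq.
move/subset_leq_card; rewrite cardsC1.
have : (0 < #|E|)%N by apply/card_gt0P; exists x.
lia.
Qed.

Lemma none_verif st : Inv st -> strat st = None -> verifies M A w (queried st) B.
Proof.
move=> I hs; apply: Cp_verif; first exact: mw.1.
move=> f e ex; case: (pselect (Cp w (queried st) f e)) => // nC; exfalso.
have nC' : ~ Cp (wof st) (queried st) f e.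
  by move=> C; apply: nC; apply: Cp_ext C => z zq; rewrite (wof_eq I zq).
move: hs; rewrite /strat; case: pickP => [y _ //|_].
case: pickP => [y _ //|none _].
case fP : (f \in queried st); case eP : (e \in queried st).
- by apply: nC; apply: Cp_full.
- move: (none e); rewrite eP /=; move/asboolPn; apply.
  by exists f, e; split => //; split => //; right.
- move: (none f); rewrite fP /=; move/asboolPn; apply.
  by exists f, e; split => //; split => //; left.
- move: (none f); rewrite fP /=; move/asboolPn; apply.
  by exists f, e; split => //; split => //; left.
Qed.

End Run.

End Main.

Unset Implicit Arguments.
Set Strict Implicit.

Theorem lemma30 (R : realType) (E : finType) (M : matroid E)
    (A : E -> area R) (B : {set E}) :
  (forall e, area_nonempty (A e)) ->
  exists S : strategy R E,
    forall w : E -> R,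
      (forall e, in_area (A e) (w e)) ->
      is_MWB M w B ->
      forall Qstar : {set E},
        min_certificate M A w Qstar -> verifies M A w Qstar B ->
        let final := run S w #|E| (init_state R E) in
        S final = None /\
        verifies M A w (queried final) B /\
        (#|queried final| <= 2 * #|Qstar|)%N.
Proof.
move=> _; exists (strat M A B) => w aw mw Qs _ VQ final.
have I0 : Inv M A B w Qs (init_state R E).
  by split; [move=> x; rewrite inE ffunE | apply/subsetP => x; rewrite inE ffunE].
have [I H] := run_ok aw VQ #|E| I0.
have hN : strat M A B final = None.
  case: H => // H; apply: full_none; move: H; rewrite -/final; lia.
split => //; split; first exact (none_verif mw I hN).
have c1 := subset_leq_card I.2.
have cT := @T_card R E M A B Qs (enum [set: E * E]) set0 (Qs_cover aw VQ).
rewrite cards0 in cT; have {}cT := cT (leq0n _).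
have c2 : (#|Tset M A B :|: Qs| <= #|Tset M A B| + #|Qs :\: Tset M A B|)%N.
  apply: leq_trans (leq_card_setU _ _).
  apply: subset_leq_card; apply/subsetP => z; rewrite !inE.
  by case: (z \in Tset M A B); rewrite ?orbF.
have c3 := cardsID (Tset M A B) Qs.
rewrite /Tset in c1 c2 c3; rewrite /final; lia.
Qed.
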